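(* Let $n\ge2$. Under the diagonal top-down model, the probability that the generated fully heterochronous ranked tree shape with $n$ leaves has $\mathbf{F}$-matrix $F$ is $$P(F)=\frac{1}{C_{n-1}}\cdot\frac{2^{n-1}}{\prod_{j=1}^{2n-2}F_{j-1,j-1}},\qquad C_{n-1}=\frac1n\binom{2n-2}{n-1}.$$
   Context: A fully heterochronous ranked tree shape with $n$ leaves is a rooted full binary tree (every node has out-degree $0$ or $2$), without leaf labels, with $n$ leaves, together with a total ordering of all $2n-1$ nodes (leaves included) such that nodes appear in increasing order along every path from the root to a leaf; the position of a node in this order, numbered $0,\dots,2n-2$, is its rank. Its $\mathbf{F}$-matrix is the $(2n-2)\times(2n-2)$ lower triangular matrix $F$, indices from $0$ to $2n-3$, where for $0\le j\le i$ the entry $F_{i,j}$ is the number of edges from a parent node $v$ to a child node $w$ with rank of $v$ at most $j$ and rank of $w$ larger than $i$ (entries with a negative index are taken to be $0$). The diagonal of such a matrix is a sequence of positive integers with $F_{0,0}=2$, $F_{k,k}=F_{k-1,k-1}\pm1$ and $F_{2n-3,2n-3}=1$; there are $C_{n-1}$ such sequences. Diagonal top-down model: first choose the diagonal $(F_{k,k})_{k=0}^{2n-3}$ uniformly at random among all such valid diagonals. Then build the remaining entries row by row: for $k=1,\dots,2n-3$, given rows $0,\dots,k-1$, choose $L\in\{0,\dots,k-1\}$ with probability $(F_{k-1,L}-F_{k-1,L-1})/F_{k-1,k-1}$ and set $F_{k,j}=F_{k-1,j}$ for $j<L$ and $F_{k,j}=F_{k-1,j}-1$ for $L\le j\le k-1$.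 Equivalently, the node of rank $k$ is attached as the child end of an edge chosen uniformly at random among the $F_{k-1,k-1}$ edges whose parent has rank at most $k-1$ and whose child has not yet been placed; it is internal if $F_{k,k}=F_{k-1,k-1}+1$ and a leaf otherwise (the node of rank $2n-2$ is a leaf on the unique remaining edge). *)

(* Defs.v *)
From mathcomp Require Import all_boot all_order all_algebra.
Set Implicit Arguments. Unset Strict Implicit. Unset Printing Implicit Defensive.
Import Order.TTheory GRing.Theory Num.Theory.

(* Nodes are identified with their ranks 0..2n-2.  A fully heterochronous
   ranked tree shape is given by its parent map on ranks: node v (1 <= v <= 2n-2)
   has parent [par v] with [par v < v] (rank increases along root-to-leaf paths);
   every node has 0 or 2 children; there are n leaves. *)

Definition nchildren (m : nat) (par : nat -> nat) (u : nat) : nat :=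
  count (fun v => par v == u) (iota 1 m).

Definition ranked_tree_shape (n : nat) (par : nat -> nat) : Prop :=
  [/\ (forall v, 1 <= v <= 2 * n - 2 -> par v < v)%N,
      (forall u, u <= 2 * n - 2 ->
          nchildren (2 * n - 2) par u = 0 \/ nchildren (2 * n - 2) par u = 2)%N
    & count (fun u => nchildren (2 * n - 2) par u == 0) (iota 0 (2 * n - 1)) = n].

Definition Fentry (m : nat) (par : nat -> nat) (i j : nat) : nat :=
  count (fun v => (par v <= j) && (i < v)) (iota 1 m).

Definition Fmatrix (n : nat) (par : nat -> nat) : 'M[nat]_(2 * n - 2) :=
  \matrix_(i < 2 * n - 2, j < 2 * n - 2)
     if (j <= i)%N then Fentry (2 * n - 2) par i j else 0%N.

Definition fext (m p : nat) (f : {ffun 'I_m -> 'I_p}) : nat -> nat :=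
  fun k => if (insub k : option 'I_m) is Some i then val (f i) else 0%N.

Definition is_diag (m : nat) (d : nat -> nat) : bool :=
  [&& d 0%N == 2%N, d m.-1 == 1%N,
      all (fun k => 0 < d k)%N (iota 0 m)
    & all (fun k => (d k == (d k.-1).+1) || ((d k).+1 == d k.-1)) (iota 1 m.-1)].

Definition next_row (r : nat -> nat) (k l dk : nat) : nat -> nat :=
  fun j => if (j < l)%N then r j
           else if (j < k)%N then (r j - 1)%N
           else if j == k then dk else 0%N.

Fixpoint rowg (d L : nat -> nat) (k : nat) : nat -> nat :=
  match k with
  | 0 => fun j => if j == 0%N then d 0%N else 0%N
  | k'.+1 => next_row (rowg d L k') k'.+1 (L k'.+1) (d k'.+1)
  end.

Definition genmat (m : nat) (d L : nat -> nat) : 'M[nat]_m :=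
  \matrix_(i < m, j < m) if (j <= i)%N then rowg d L i j else 0%N.

Local Open Scope ring_scope.

(* probability of choosing L at step k, given row r = row k-1:
   (F_{k-1,L} - F_{k-1,L-1}) / F_{k-1,k-1}, for L in {0,...,k-1} *)
Definition step_w (r : nat -> nat) (k l : nat) : rat :=
  if (l < k)%N then
    ((r l)%:R - (if l is l'.+1 then r l' else 0%N)%:R) / (r k.-1)%:R
  else 0.

(* Probability that the diagonal top-down model with n leaves outputs F:
   uniform diagonal D among valid diagonals, then choices L_1..L_{m-1}
   (L_0 is a dummy fixed to 0). *)
Definition Prob (n : nat) (F : 'M[nat]_(2 * n - 2)) : rat :=
  let m := (2 * n - 2)%N in
  let Diags := [set D : {ffun 'I_m -> 'I_m.+2} | is_diag m (fext D)] in
  \sum_(D in Diags)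
     (#|Diags|%:R)^-1 *
     \sum_(Lf : {ffun 'I_m -> 'I_m} | fext Lf 0%N == 0%N)
        (\prod_(1 <= k < m) step_w (rowg (fext D) (fext Lf) k.-1) k (fext Lf k))
        * (genmat m (fext D) (fext Lf) == F)%:R.

Definition catalan_pred (n : nat) : rat := (n%:R)^-1 * ('C(2 * n - 2, n - 1))%:R.

(* Main.v *)
Require Import Defs.
From mathcomp Require Import all_boot all_order all_algebra.
Import Order.TTheory GRing.Theory Num.Theory.
From mathcomp Require Import all_boot all_order all_algebra.
From mathcomp Require Import zify.
Set Implicit Arguments. Unset Strict Implicit. Unset Printing Implicit Defensive.

Definition consf (T : Type) m (x : T) (g : {ffun 'I_m -> T}) : {ffun 'I_m.+1 -> T} :=
  [ffun i => if unlift ord0 i is Some j then g j else x].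

Lemma sum_ffunS (T : finType) m (F : {ffun 'I_m.+1 -> T} -> nat) :
  \sum_(f : {ffun 'I_m.+1 -> T}) F f = \sum_(x : T) \sum_(g : {ffun 'I_m -> T}) F (consf x g).
Proof.
rewrite pair_big /=.
rewrite (reindex (fun p : T * {ffun 'I_m -> T} => consf p.1 p.2)) //=.
exists (fun f : {ffun 'I_m.+1 -> T} => (f ord0, [ffun j => f (lift ord0 j)])).
  move=> [x g] _ /=; congr (_, _).
    by rewrite ffunE unlift_none.
  by apply/ffunP => j; rewrite !ffunE liftK.
move=> f _ /=; apply/ffunP => i; rewrite ffunE.
by case: (unliftP ord0 i) => [j ->|->]; rewrite ?ffunE.
Qed.

Lemma fext_val m p (f : {ffun 'I_m -> 'I_p}) (i : 'I_m) : fext f i = f i.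
Proof. by rewrite /fext valK. Qed.

Lemma fext_out m p (f : {ffun 'I_m -> 'I_p}) k : m <= k -> fext f k = 0.
Proof. by move=> H; rewrite /fext insubF // ltnNge H. Qed.

Definition consn (x : nat) (d : nat -> nat) : nat -> nat :=
  fun k => if k is k'.+1 then d k' else x.

Lemma fext_consf K m (x : 'I_K) (g : {ffun 'I_m -> 'I_K}) k :
  fext (consf x g) k = consn x (fext g) k.
Proof.
case: k => [|k] /=.
  by rewrite (fext_val _ ord0) ffunE unlift_none.
case: (ltnP k m) => H.
  rewrite (fext_val _ (lift ord0 (Ordinal H))) ffunE liftK.
  by rewrite (fext_val _ (Ordinal H)).
by rewrite !fext_out.
Qed.
Fixpoint Bw (t a : nat) : nat :=
  match t with
  | 0 => (a == 1)
  | t'.+1 => if a is a'.+1 then Bw t' a'.+2 + Bw t' a' else 0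
  end.

Lemma Bw0 t : Bw t 0 = 0.
Proof. by case: t. Qed.

Lemma Bw_small t a : t.+1 < a -> Bw t a = 0.
Proof.
elim: t a => [|t IH] [|a] //= H.
- by case: a H => [|a].
- rewrite !IH //; lia.
Qed.

Lemma Bw_diag h : Bw h h.+1 = 1.
Proof. elim: h => [|h IH] //=. by rewrite Bw_small // IH. Qed.

Lemma BwS t a : Bw t.+1 a.+1 = Bw t a.+2 + Bw t a.
Proof. by []. Qed.

Lemma Bw_closed k h :
  Bw (h + 2 * k) h.+1 + (if k is k'.+1 then 'C(h + 2 * k, k') else 0) = 'C(h + 2 * k, k).
Proof.
elim: k h => [|k IHk] h.
  by rewrite muln0 !addn0 Bw_diag bin0.
elim: h => [|h IHh].
- rewrite add0n (_ : 2 * k.+1 = (1 + 2 * k).+1); last lia.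
  rewrite BwS Bw0 addn0.
  have H := IHk 1.
  rewrite binS.
  have Hs : 'C(1 + 2 * k, k.+1) = 'C(1 + 2 * k, k).
    by rewrite -{1}(bin_sub (_ : k <= 1 + 2 * k)); [congr 'C(_, _); lia | lia].
  move: H Hs; case: k {IHk} => [|k] H Hs.
    move: H Hs; rewrite !bin0 => H Hs; lia.
  rewrite (binS (1 + 2 * k.+1) k); lia.
- have E1 : h.+1 + 2 * k.+1 = (h.+2 + 2 * k).+1 by lia.
  rewrite E1 BwS.
  have H1 := IHk h.+2. move: IHh.
  rewrite (_ : h + 2 * k.+1 = h.+2 + 2 * k); last lia.
  rewrite !binS => H2.
  move: H1 H2; case: k {IHk E1} => [|k] H1 H2.
    move: H1 H2; rewrite !bin0 => H1 H2; lia.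
  rewrite binS; lia.
Qed.

Lemma catalan_Bw N : (N.+2 * Bw (1 + 2 * N) 2 = 'C(2 * N.+2 - 2, N.+1))%N.
Proof.
have H := Bw_closed N 1.
rewrite (_ : 2 * N.+2 - 2 = (1 + 2 * N).+1); last lia.
rewrite binS.
have Hs : 'C(1 + 2 * N, N.+1) = 'C(1 + 2 * N, N).
  by rewrite -{1}(bin_sub (_ : N <= 1 + 2 * N)); [congr 'C(_, _); lia | lia].
rewrite Hs.
move: H Hs; case: N => [|N] H Hs.
  by move: H; rewrite /=.
have Hl := mul_bin_left (1 + 2 * N.+1) N.
rewrite (_ : 1 + 2 * N.+1 - N = N.+3) in Hl; last lia.
nia.
Qed.
Definition stepok (d : nat -> nat) (k : nat) : bool :=
  (d k == (d k.-1).+1) || ((d k).+1 == d k.-1).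

Definition Qd m a (d : nat -> nat) : bool :=
  [&& d 0 == a, d m.-1 == 1, all (fun k => 0 < d k) (iota 0 m)
    & all (stepok d) (iota 1 m.-1)].

Lemma is_diag_Qd m d : is_diag m d = Qd m 2 d.
Proof. by []. Qed.

Lemma Qd_ext m a d d' : d =1 d' -> Qd m a d = Qd m a d'.
Proof.
move=> E; rewrite /Qd !E; congr [&& _, _, _ & _].
  by apply: eq_all => k; rewrite E.
by apply: eq_all => k; rewrite /stepok !E.
Qed.

Lemma iota_succ m n : iota m.+1 n = map succn (iota m n).
Proof. by elim: n m => [|n IH] m //=; rewrite IH. Qed.

Lemma Qd_cons m a x d :
  Qd m.+2 a (consn x d) =
  [&& x == a, 0 < x, Qd m.+1 (d 0) d & (d 0 == x.+1) || ((d 0).+1 == x)].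
Proof.
have E1 : all (fun k => 0 < consn x d k) (iota 0 m.+2)
          = (0 < x) && all (fun k => 0 < d k) (iota 0 m.+1).
  have -> : iota 0 m.+2 = 0 :: iota 1 m.+1 by [].
  by rewrite (iota_succ 0 m.+1) [all _ (_ :: _)]/= all_map.
have E2 : all (stepok (consn x d)) (iota 1 (m.+2).-1)
          = ((d 0 == x.+1) || ((d 0).+1 == x)) && all (stepok d) (iota 1 m).
  have -> : iota 1 (m.+2).-1 = 1 :: iota 2 m by [].
  rewrite [all _ (_ :: _)]/= (iota_succ 1 m) (iota_succ 0 m) !all_map.
  by congr (_ && _); apply: eq_all => k.
rewrite /Qd E1 E2.
change (consn x d 0) with x.
change (consn x d (m.+2).-1) with (d (m.+1).-1).
rewrite eqxx.
by case: (x == a); case: (0 < x); case: (d _ == 1); case: all; case: all; case: (_ || _).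
Qed.

Definition Ncnt m K a := \sum_(D : {ffun 'I_m -> 'I_K}) (Qd m a (fext D) : nat).

Lemma sum_ord_eq K a c : \sum_(x : 'I_K) ((val x == a) * c) = (a < K) * c.
Proof.
case: (ltnP a K) => H.
  rewrite (bigD1 (Ordinal H)) //= eqxx mul1n big1 ?addn0 ?mul1n // => x Hx.
  suff -> : (val x == a) = false by [].
  by apply/eqP => E; move/eqP: Hx; apply; apply: val_inj.
rewrite big1 // => x _.
suff -> : (val x == a) = false by [].
by apply/eqP => E; move: (ltn_ord x); rewrite E; lia.
Qed.

Lemma Ncnt1 K a : Ncnt 1 K a = (a < K) * (a == 1).
Proof.
rewrite /Ncnt sum_ffunS.
under eq_bigr => x _.
  under eq_bigr => g _.
    rewrite (Qd_ext _ _ (fext_consf x g)) /Qd /= andbT.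
    over.
  rewrite sum_nat_const card_ffun !card_ord expn0 mul1n.
  over.
transitivity (\sum_(x : 'I_K) ((val x == a) * (a == 1))); last first.
  by rewrite sum_ord_eq.
apply: eq_bigr => x _ /=.
by case: (val x =P a) => [->|]; case: (a =P 1) => [->|] //=; rewrite ?andbF.
Qed.

Lemma Qd_split m b d : Qd m b d = (d 0 == b) && Qd m (d 0) d.
Proof. by rewrite /Qd eqxx; case: (d 0 == b). Qed.

Lemma NcntS m K a : Ncnt m.+2 K a =
  if a is a'.+1 then (a < K) * (Ncnt m.+1 K a'.+2 + Ncnt m.+1 K a') else 0.
Proof.
rewrite /Ncnt sum_ffunS.
under eq_bigr => x _ do under eq_bigr => g _ do rewrite (Qd_ext _ _ (fext_consf x g)) Qd_cons.
transitivity (\sum_(x:'I_K) ((val x == a) *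
   (if a is a'.+1 then \sum_(D : {ffun 'I_m.+1 -> 'I_K}) (Qd m.+1 a'.+2 (fext D) : nat)
       + \sum_(D : {ffun 'I_m.+1 -> 'I_K}) (Qd m.+1 a' (fext D) : nat) else 0))).
  apply: eq_bigr => x _.
  case: (val x =P a) => [Ex|Nx]; last first.
    by rewrite mul0n big1 // => g _; move/eqP: Nx => /negbTE ->.
  rewrite mul1n Ex.
  case: a Ex => [|a'] Ex.
    by rewrite big1.
  rewrite -big_split; apply: eq_bigr => g _ /=.
  rewrite (Qd_split _ a'.+2) (Qd_split _ a').
  case: (Qd m.+1 (fext g 0) (fext g)); rewrite ?andbF //=.
  case: (fext g 0 =P a'.+2) => [->|] //=.
    by have -> : (a'.+2 == a') = false by apply/eqP; lia.
  by move=> _; rewrite eqSS; case: (fext g 0 == a').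
by rewrite sum_ord_eq; case: a => [|a] //; rewrite muln0.
Qed.

Lemma Ncnt_Bw t K a : a + t < K -> Ncnt t.+1 K a = Bw t a.
Proof.
elim: t a => [|t IH] a H.
  have HaK : a < K by lia.
  by rewrite Ncnt1 HaK mul1n.
rewrite NcntS; case: a H => [|a] H.
  by rewrite Bw0.
have HaK : a.+1 < K by lia.
rewrite HaK mul1n.
by rewrite BwS !IH //; lia.
Qed.

Lemma card_Diags n : 2 <= n ->
  #|[set D : {ffun 'I_(2 * n - 2) -> 'I_(2 * n - 2).+2} | is_diag (2 * n - 2) (fext D)]|
  = Bw (2 * n - 3) 2.
Proof.
move=> Hn.
rewrite -sum1dep_card big_mkcond /=.
have -> : 2 * n - 2 = (2 * n - 3).+1 by lia.
rewrite -(@Ncnt_Bw _ (2 * n - 3).+3 2); last lia.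
by apply: eq_bigr => D _; rewrite is_diag_Qd; case: Qd.
Qed.
Lemma Fentry_suffix m par i j : i <= m ->
  Fentry m par i j = count (fun v => par v <= j) (iota i.+1 (m - i)).
Proof.
move=> H; rewrite /Fentry -{1}(subnKC H) iotaD count_cat add1n.
rewrite (@eq_in_count _ _ pred0); last first.
  by move=> v; rewrite mem_iota => /andP[_ Hv] /=; rewrite (_ : i < v = false) ?andbF //; lia.
rewrite count_pred0 add0n; apply: eq_in_count => v.
by rewrite mem_iota => /andP[Hv _] /=; rewrite (_ : i < v = true) ?andbT //; lia.
Qed.

Lemma Fentry_step m par k j : k < m ->
  Fentry m par k j = (par k.+1 <= j) + Fentry m par k.+1 j.
Proof.
move=> H; rewrite !Fentry_suffix //; last exact: ltnW.
by rewrite (_ : m - k = (m - k.+1).+1) /=; last lia.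
Qed.

Lemma Fentry_le m par i j : Fentry m par i j <= m.
Proof. by rewrite /Fentry (leq_trans (count_size _ _)) // size_iota. Qed.

Lemma Fentry_mono m par i j : Fentry m par i j <= Fentry m par i j.+1.
Proof.
apply: sub_count => v /= /andP[H1 H2]; rewrite H2 andbT; exact: leqW.
Qed.

Lemma count_le_split (s : seq nat) (f : nat -> nat) p :
  count (fun v => f v <= p.+1) s = count (fun v => f v <= p) s + count (fun v => f v == p.+1) s.
Proof.
elim: s => //= x s ->.
case: (ltngtP (f x) p.+1) => H.
- by rewrite (_ : f x <= p = true) //; lia.
- by rewrite (_ : f x <= p = false) //; lia.
- by rewrite H ltnn /=; lia.
Qed.

Lemma count_le0 (s : seq nat) (f : nat -> nat) :
  count (fun v => f v <= 0) s = count (fun v => f v == 0) s.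
Proof. by apply: eq_count => v; rewrite leqn0. Qed.

Definition tree_ok m (par : nat -> nat) :=
  forall v, 1 <= v <= m -> par v < v.

Lemma children_suffix m par k : tree_ok m par -> k <= m ->
  count (fun v => par v == k) (iota k.+1 (m - k)) = nchildren m par k.
Proof.
move=> Ht H; rewrite /nchildren.
have -> : iota 1 m = iota 1 k ++ iota k.+1 (m - k) by rewrite -{1}(subnKC H) iotaD add1n.
rewrite count_cat (@eq_in_count _ _ pred0 (iota 1 k)) ?count_pred0 //.
move=> v; rewrite mem_iota => /andP[H1 H2] /=.
have Hv : 1 <= v <= m by apply/andP; split => //; lia.
have := Ht v Hv => Hp; apply/eqP; lia.
Qed.
Lemma D0_bound m par (i : 'I_m) : Fentry m par i i < m.+2.
Proof. by rewrite ltnS leqW // Fentry_le. Qed.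

Definition D0 m par : {ffun 'I_m -> 'I_m.+2} := [ffun i => Ordinal (D0_bound par i)].

Definition pv (par : nat -> nat) i := if par i < i then par i else 0.

Lemma L0_bound m par (i : 'I_m) : pv par i < m.
Proof. have := ltn_ord i; rewrite /pv; case: ifP => H; lia. Qed.

Definition L0 m par : {ffun 'I_m -> 'I_m} := [ffun i => Ordinal (L0_bound par i)].

Lemma fext_D0 m par k : k < m -> fext (D0 m par) k = Fentry m par k k.
Proof. by move=> H; rewrite (fext_val _ (Ordinal H)) ffunE. Qed.

Lemma fext_L0 m par k : k < m -> fext (L0 m par) k = pv par k.
Proof. by move=> H; rewrite (fext_val _ (Ordinal H)) ffunE. Qed.

Lemma rowgS d L k : rowg d L k.+1 = next_row (rowg d L k) k.+1 (L k.+1) (d k.+1).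
Proof. by []. Qed.

Lemma rowg_D0L0 m par : tree_ok m par -> forall i j, j <= i < m ->
  rowg (fext (D0 m par)) (fext (L0 m par)) i j = Fentry m par i j.
Proof.
move=> Ht; elim=> [|i IH] j /andP[Hj Hm].
  have -> : j = 0 by lia.
  by rewrite /= fext_D0.
rewrite rowgS /next_row fext_L0 //.
have Hp : par i.+1 < i.+1 by apply: Ht; lia.
rewrite /pv Hp.
case: (ltnP j (par i.+1)) => Hjp.
  rewrite IH; last lia.
  by rewrite Fentry_step; [rewrite leqNgt Hjp | lia].
case: (ltnP j i.+1) => Hji.
  rewrite IH; last lia.
  by rewrite Fentry_step; [rewrite Hjp add1n subn1 | lia].
have -> : j = i.+1 by lia.
by rewrite eqxx fext_D0.
Qed.

Definition Fm m par : 'M[nat]_m :=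
  \matrix_(i < m, j < m) if (j <= i)%N then Fentry m par i j else 0%N.

Lemma genmat_D0L0 m par : tree_ok m par ->
  genmat m (fext (D0 m par)) (fext (L0 m par)) = Fm m par.
Proof.
move=> Ht; apply/matrixP => i j; rewrite !mxE; case: ifP => // Hji.
by apply: rowg_D0L0 => //; rewrite Hji ltn_ord.
Qed.

Definition ch_ok m par :=
  forall u, u <= m -> nchildren m par u = 0 \/ nchildren m par u = 2.

Lemma D0_diag m par : 0 < m -> tree_ok m par -> ch_ok m par ->
  is_diag m (fext (D0 m par)).
Proof.
move=> Hm Ht Hc.
apply/and4P; split.
- rewrite fext_D0 // Fentry_suffix // subn0 count_le0.
  rewrite (_ : iota 1 m = iota 1 (m - 0)) ?children_suffix ?subn0 //.
  have : nchildren m par 0 != 0.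
    have H1 : par 1 < 1 by apply: Ht; lia.
    rewrite /nchildren (_ : m = (m.-1).+1) /=; last lia.
    by rewrite (_ : par 1 = 0) //; lia.
  by case: (Hc 0 (leq0n _)) => ->.
- rewrite fext_D0; last lia.
  rewrite Fentry_suffix; last lia.
  rewrite (_ : m.-1.+1 = m); last lia.
  rewrite (_ : m - m.-1 = 1); last lia.
  have := Ht m; rewrite Hm leqnn => /(_ isT) H /=.
  by rewrite (_ : par m <= m.-1); last lia.
- apply/allP => k; rewrite mem_iota add0n => /andP[_ Hk].
  rewrite fext_D0 // Fentry_step //.
  have := Ht k.+1; rewrite Hk => /(_ isT); rewrite ltnS => ->.
  by [].
- apply/allP => k; rewrite mem_iota => /andP[Hk1 Hk2].
  case: k Hk1 Hk2 => [|k] // _ Hk2.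
  rewrite !fext_D0 /=; try lia.
  rewrite (Fentry_step _ _ (_ : k < m)); last lia.
  have := Ht k.+1; rewrite (_ : 1 <= k.+1 <= m); last lia.
  move=> /(_ isT); rewrite ltnS => -> /=.
  rewrite Fentry_suffix; last lia.
  rewrite count_le_split -Fentry_suffix; last lia.
  rewrite children_suffix //; last lia.
  have Hk1m : k.+1 <= m by lia.
  by case: (Hc k.+1 Hk1m) => ->; apply/orP; [right|left]; apply/eqP; lia.
Qed.
Import Order.TTheory GRing.Theory Num.Theory.
Local Open Scope ring_scope.

Lemma step_w_lt r k l : step_w r k l != 0 -> (l < k)%N.
Proof. by rewrite /step_w; case: ifP => // _; rewrite eqxx. Qed.

Lemma Zuniq m par (D : {ffun 'I_m -> 'I_m.+2}) (Lf : {ffun 'I_m -> 'I_m}) :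
  tree_ok m par -> fext Lf 0 = 0%N ->
  (\prod_(1 <= k < m) step_w (rowg (fext D) (fext Lf) k.-1) k (fext Lf k)) != 0 ->
  genmat m (fext D) (fext Lf) = Fm m par ->
  D = D0 m par /\ Lf = L0 m par.
Proof.
move=> Ht HL0 Hp HG.
have Hw : forall k, (1 <= k < m)%N ->
    step_w (rowg (fext D) (fext Lf) k.-1) k (fext Lf k) != 0.
  move: Hp; rewrite prodf_seq_neq0 => /allP H k Hk.
  by have := H k; rewrite mem_index_iota Hk => /(_ isT).
have HL : forall k, (1 <= k < m)%N -> (fext Lf k < k)%N.
  by move=> k Hk; apply: step_w_lt; apply: Hw.
have Hrow : forall i j, (j <= i < m)%N -> rowg (fext D) (fext Lf) i j = Fentry m par i j.
  move=> i j /andP[Hji Him].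
  have Hjm : (j < m)%N by lia.
  have := congr1 (fun M : 'M[nat]_m => M (Ordinal Him) (Ordinal Hjm)) HG.
  by rewrite /= !mxE /= Hji.
split.
- apply/ffunP => i; apply/val_inj; rewrite ffunE /= -fext_val.
  case: i => [[|i] Hi] /=.
    by have := Hrow 0%N 0%N; rewrite /= => <-.
  rewrite -Hrow; last by rewrite leqnn.
  rewrite rowgS /next_row.
  have := HL i.+1; rewrite Hi => /(_ isT) H.
  by rewrite (_ : (i.+1 < fext Lf i.+1)%N = false) ?ltnn ?eqxx //; lia.
- apply/ffunP => i; apply/val_inj; rewrite ffunE /= -fext_val /pv.
  case: i => [[|k] Hk] /=.
    by [].  
  have Hpk : (par k.+1 < k.+1)%N by apply: Ht; lia.
  rewrite Hpk.
  have Hlk : (fext Lf k.+1 < k.+1)%N by apply: HL; lia.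
  have Hr : forall j, (j <= k)%N -> rowg (fext D) (fext Lf) k j = Fentry m par k j.
    by move=> j Hj; apply: Hrow; lia.
  have Hr1 : forall j, (j <= k.+1)%N ->
      next_row (rowg (fext D) (fext Lf) k) k.+1 (fext Lf k.+1) (fext D k.+1) j
      = Fentry m par k.+1 j.
    by move=> j Hj; rewrite -rowgS; apply: Hrow; lia.
  have Hst : forall j, Fentry m par k j = ((par k.+1 <= j) + Fentry m par k.+1 j)%N.
    by move=> j; apply: Fentry_step; lia.
  case: (ltngtP (fext Lf k.+1) (par k.+1)) => Hlp //.
  + exfalso.
    have := Hr1 (fext Lf k.+1) (ltnW Hlk).
    rewrite /next_row ltnn Hlk Hr; last lia.
    rewrite Hst (_ : (par k.+1 <= fext Lf k.+1)%N = false) ?add0n; last lia.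
    move=> E.
    have H0 : Fentry m par k (fext Lf k.+1) = 0%N by rewrite Hst; lia.
    have := Hw k.+1; rewrite Hk => /(_ isT).
    rewrite /step_w Hlk /= Hr; last lia.
    rewrite H0.
    move: H0 Hlk; case: (fext Lf k.+1) => [|l] H0 Hlk.
      by rewrite subrr mul0r eqxx.
    rewrite Hr; last lia.
    have := Fentry_mono m par k l; rewrite H0 leqn0 => /eqP ->.
    by rewrite subrr mul0r eqxx.
  + exfalso.
    have := Hr1 (par k.+1) (ltnW Hpk).
    rewrite /next_row Hlp Hr; last lia.
    rewrite Hst leqnn; lia.
Qed.

Definition cnt m (par : nat -> nat) k u := count (fun v => par v == u) (iota k (m.+1 - k)).

Lemma step_val m par k : tree_ok m par -> (1 <= k < m)%N ->
  step_w (rowg (fext (D0 m par)) (fext (L0 m par)) k.-1) k (fext (L0 m par) k)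
  = (cnt m par k (par k))%:R / (Fentry m par k.-1 k.-1)%:R.
Proof.
move=> Ht; case: k => [|k] // /andP[_ Hk].
have Hp : (par k.+1 < k.+1)%N by apply: Ht; lia.
rewrite fext_L0 // /pv Hp /step_w Hp /=.
rewrite (rowg_D0L0 Ht (_ : (k <= k < m)%N)); last by rewrite leqnn; lia.
congr (_ / _).
rewrite /cnt subSS (rowg_D0L0 Ht (_ : (par k.+1 <= k < m)%N)); last lia.
rewrite Fentry_suffix; last lia.
move: Hp; case: (par k.+1) => [|p] Hp.
  by rewrite subr0 count_le0.
rewrite (rowg_D0L0 Ht (_ : (p <= k < m)%N)); last lia.
rewrite Fentry_suffix; last lia.
by rewrite count_le_split natrD addrC addKr.
Qed.

Definition Prob' (m : nat) (F : 'M[nat]_m) : rat :=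
  let Diags := [set D : {ffun 'I_m -> 'I_m.+2} | is_diag m (fext D)] in
  \sum_(D in Diags)
     (#|Diags|%:R)^-1 *
     \sum_(Lf : {ffun 'I_m -> 'I_m} | fext Lf 0%N == 0%N)
        (\prod_(1 <= k < m) step_w (rowg (fext D) (fext Lf) k.-1) k (fext Lf k))
        * (genmat m (fext D) (fext Lf) == F)%:R.

Lemma Prob_Prob' n F : @Prob n F = @Prob' (2 * n - 2)%N F.
Proof. by []. Qed.

Lemma main_prob m par : (0 < m)%N -> tree_ok m par -> ch_ok m par ->
  Prob' (Fm m par) =
  (#|[set D : {ffun 'I_m -> 'I_m.+2} | is_diag m (fext D)]|%:R)^-1 *
  ((\prod_(1 <= k < m) cnt m par k (par k))%:R /
    \prod_(1 <= k < m) (Fentry m par k.-1 k.-1)%:R).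
Proof.
move=> Hm Ht Hc; rewrite /Prob' /=.
rewrite (bigD1 (D0 m par)) /=; last by rewrite inE D0_diag.
rewrite [X in _ + X]big1 ?addr0; last first.
  move=> D /andP[_ HD]; rewrite big1 ?mulr0 // => Lf /eqP HL0.
  apply/eqP; rewrite mulf_eq0; apply/orP.
  case: (boolP (_ == 0)) => [_|Hnz]; [by left|right].
  case: (genmat m _ _ =P Fm m par) => HG //=.
  have [E _] := Zuniq Ht HL0 Hnz HG.
  by move/eqP: HD; rewrite E.
congr (_ * _).
rewrite (bigD1 (L0 m par)) /=; last by rewrite fext_L0 // /pv ltnn.
rewrite [X in _ + X]big1 ?addr0; last first.
  move=> Lf /andP[/eqP HL0 HLne].
  apply/eqP; rewrite mulf_eq0; apply/orP.
  case: (boolP (_ == 0)) => [_|Hnz]; [by left|right].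
  case: (genmat m _ _ =P Fm m par) => HG //=.
  have [_ E] := Zuniq Ht HL0 Hnz HG.
  by move/eqP: HLne; rewrite E.
rewrite genmat_D0L0 // eqxx mulr1.
rewrite (eq_big_nat _ _ (fun k Hk => step_val Ht Hk)).
by rewrite big_split /= prodfV natr_prod.
Qed.

Lemma cnt_cons m par a u : (a <= m)%N ->
  cnt m par a u = ((par a == u) + cnt m par a.+1 u)%N.
Proof. by move=> H; rewrite /cnt (_ : (m.+1 - a = (m.+1 - a.+1).+1)%N) //; lia. Qed.

Lemma fact_prod m par : tree_ok m par -> forall t a, (m.+1 - a = t)%N -> (1 <= a <= m.+1)%N ->
  (\prod_(a <= k < m.+1) cnt m par k (par k) = \prod_(u < m.+1) (cnt m par a u)`!)%N.
Proof.
move=> Ht; elim=> [|t IH] a Ht1 /andP[Ha1 Ha2].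
  rewrite big_geq; last lia.
  by rewrite big1 // => u _; rewrite /cnt Ht1.
rewrite big_ltn; last lia.
rewrite (IH a.+1); [|lia|lia].
have Hpa : (par a < m.+1)%N by have := Ht a; lia.
rewrite (bigD1 (Ordinal Hpa)) //= [in RHS](bigD1 (Ordinal Hpa)) //=.
rewrite cnt_cons; last lia.
rewrite eqxx add1n factS mulnA.
congr (_ * _)%N; apply: eq_bigr => u Hu.
rewrite (@cnt_cons m par a u); last lia.
rewrite (_ : (par a == u) = false) //.
by apply/eqP => E; move/eqP: Hu; apply; apply: val_inj; rewrite /= E.
Qed.

Lemma sum_count m (par : nat -> nat) s : (forall v, v \in s -> par v < m.+1)%N ->
  (\sum_(u < m.+1) count (fun v => par v == u) s = size s)%N.
Proof.
elim: s => [|x s IH] H /=.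
  by rewrite big1.
rewrite big_split /= IH; last by move=> v Hv; apply: H; rewrite inE Hv orbT.
have Hx : (par x < m.+1)%N by apply: H; rewrite inE eqxx.
rewrite (bigD1 (Ordinal Hx)) //= eqxx big1 // => u Hu.
by rewrite (_ : (par x == u) = false) //; apply/eqP => E; move/eqP: Hu; apply; apply: val_inj; rewrite /= E.
Qed.

Lemma Fentry_last m par : (0 < m)%N -> tree_ok m par -> Fentry m par m.-1 m.-1 = 1%N.
Proof.
move=> Hm Ht.
rewrite Fentry_suffix; last lia.
rewrite (_ : m.-1.+1 = m); last lia.
rewrite (_ : (m - m.-1 = 1)%N); last lia.
have := Ht m; rewrite Hm leqnn => /(_ isT) H /=.
by rewrite (_ : (par m <= m.-1)%N); last lia.
Qed.

Lemma prod_pow2 m par e : (0 < m)%N -> tree_ok m par -> ch_ok m par -> m = (2 * e)%N ->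
  (\prod_(1 <= k < m) cnt m par k (par k) = 2 ^ e)%N.
Proof.
move=> Hm Ht Hc He.
have Hlast : cnt m par m (par m) = 1%N.
  by rewrite /cnt (_ : (m.+1 - m = 1)%N) /= ?eqxx //; lia.
have E : (\prod_(1 <= k < m.+1) cnt m par k (par k)
          = \prod_(1 <= k < m) cnt m par k (par k) * cnt m par m (par m))%N.
  by rewrite big_nat_recr //=.
rewrite Hlast muln1 in E; rewrite -E.
rewrite (fact_prod Ht (erefl _)); last lia.
have Hn : forall u : 'I_m.+1, cnt m par 1 u = nchildren m par u.
  by move=> u; rewrite /cnt /nchildren (_ : (m.+1 - 1 = m)%N) //; lia.
under eq_bigr => u _ do rewrite Hn.
have Hf : forall u : 'I_m.+1, ((nchildren m par u)`! = 2 ^ (nchildren m par u)./2)%N.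
  by move=> u; have := ltn_ord u; rewrite ltnS => /Hc [] ->.
under eq_bigr => u _ do rewrite Hf.
rewrite -expn_sum; congr (2 ^ _)%N.
have Hs : (\sum_(u < m.+1) nchildren m par u = m)%N.
  rewrite /nchildren sum_count ?size_iota // => v; rewrite mem_iota => Hv.
  have := Ht v; lia.
have Hd : (\sum_(u < m.+1) nchildren m par u = 2 * \sum_(u < m.+1) (nchildren m par u)./2)%N.
  rewrite big_distrr; apply: eq_bigr => u _.
  by have := ltn_ord u; rewrite ltnS => /Hc [] ->.
apply/eqP; rewrite -(eqn_pmul2l (isT : (0 < 2)%N)) -Hd Hs He.
by [].
Qed.

Theorem proposition5 (n : nat) (par : nat -> nat) :
  (2 <= n)%N -> ranked_tree_shape n par ->
  Prob (Fmatrix n par) =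
    (catalan_pred n)^-1 *
    ((2%:R ^+ (n - 1)) /
       \prod_(1 <= j < (2 * n - 2).+1)
          (Fentry (2 * n - 2) par (j - 1) (j - 1))%:R).
Proof.
move=> Hn [Ht0 Hc0 _].
have Ht : tree_ok (2 * n - 2) par := Ht0.
have Hc : ch_ok (2 * n - 2) par := Hc0.
have Hm : (0 < 2 * n - 2)%N by lia.
rewrite Prob_Prob' (_ : Fmatrix n par = Fm (2 * n - 2) par) //.
rewrite main_prob // card_Diags //.
rewrite (@prod_pow2 _ _ (n - 1)) //; last lia.
rewrite natrX.
congr (_ * (_ / _)).
  congr (_^-1).
  rewrite /catalan_pred.
  case: n Hn {Ht0 Hc0 Ht Hc Hm} => [|[|N]] // _.
  rewrite (_ : (N.+2 - 1 = N.+1)%N) // (_ : (2 * N.+2 - 3 = 1 + 2 * N)%N); last lia.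
  by rewrite -catalan_Bw natrM mulKf // pnatr_eq0.
rewrite big_nat_recr /=; last lia.
rewrite (_ : (2 * n - 2 - 1 = (2 * n - 2).-1)%N); last lia.
rewrite Fentry_last // mulr1.
by apply: eq_big_nat => j Hj; rewrite subn1.
Qed.
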